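(* Let $\mathcal{P}$ be a profile of unrooted phylogenetic trees whose display graph $G(\mathcal{P})$ is connected. Let $F$ be any minimal separator of $\mathrm{LG}(\mathcal{P})$ and let $u$ be any vertex of any input tree. Then $\mathrm{Inc}(u)\not\subseteq F$.
   Context: A phylogenetic tree is an unrooted tree whose leaves are bijectively labeled (leaves identified with labels; internal vertices have degree at least three). A profile $\mathcal{P}=\{T_1,\dots,T_k\}$ is a finite collection of phylogenetic trees (the input trees); internal vertices of distinct trees are disjoint, while leaves with the same label are the same vertex. The display graph $G(\mathcal{P})$ has vertex set $\bigcup_i V(T_i)$ and edge set $\bigcup_i E(T_i)$. $\mathrm{LG}(\mathcal{P})$ is the line graph of $G(\mathcal{P})$ (vertices are edges of $G(\mathcal{P})$, adjacent iff they share an endpoint). For a vertex $u$ of an input tree, $\mathrm{Inc}(u)$ is the set of edges of $G(\mathcal{P})$ incident with $u$, i.e., the set of vertices $e$ of $\mathrm{LG}(\mathcal{P})$ with $u\in e$. In a graph $G$, for nonadjacent vertices $a,b$, an $a$-$b$ separator is $U\subset V(G)$ with $a,b$ in different components of $G-U$; it is minimal if no proper subset is an $a$-$b$ separator; a minimal separator is a minimal $a$-$b$ separator for some nonadjacent $a,b$. *)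

(* Defs.v *)
(* finite graphs as symmetric irreflexive relations on a finType. *)
From mathcomp Require Import all_boot.
Set Implicit Arguments. Unset Strict Implicit. Unset Printing Implicit Defensive.

Section Phylo.
Variable V : finType. (* ambient type containing all vertices of all input trees *)

Definition deg (E : rel V) (x : V) : nat := #|[set y | E x y]|.

(* leaves: vertices of degree at most one (degree 0 only for a one-vertex tree) *)
Definition leaf (E : rel V) (x : V) : bool := deg E x <= 1.

(* A phylogenetic tree with vertex set Vt and edge relation E:
   a simple, nonempty, connected, acyclic graph on Vt whose
   internal (non-leaf) vertices have degree at least 3. *)
Definition is_phylo_tree (Vt : {set V}) (E : rel V) : Prop :=
  [/\ symmetric E, irreflexive E,
      (forall x y, E x y -> (x \in Vt) && (y \in Vt)) & Vt != set0] /\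
  [/\ {in Vt &, forall x y, connect E x y},
      (forall c : seq V, ucycle E c -> size c < 3) &
      {in Vt, forall x, ~~ leaf E x -> 3 <= deg E x}].

(* A profile of k trees: tree i has vertex set Vt i and edges E i.
   Vertices shared by distinct trees are leaves (labels) in both;
   internal vertices of distinct trees are disjoint. *)
Definition is_profile (k : nat) (Vt : 'I_k -> {set V}) (E : 'I_k -> rel V) : Prop :=
  (forall i, is_phylo_tree (Vt i) (E i)) /\
  (forall i j x, i != j -> x \in Vt i -> x \in Vt j -> leaf (E i) x && leaf (E j) x).

Definition dg_vert (k : nat) (Vt : 'I_k -> {set V}) : {set V} := \bigcup_i Vt i.
Definition dg_adj (k : nat) (E : 'I_k -> rel V) : rel V :=
  fun x y => [exists i, E i x y].

Definition dg_connected (k : nat) (Vt : 'I_k -> {set V}) (E : 'I_k -> rel V) : Prop :=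
  {in dg_vert Vt &, forall x y, connect (dg_adj E) x y}.

Definition dg_edges (k : nat) (E : 'I_k -> rel V) : {set {set V}} :=
  [set e | [exists x, exists y, dg_adj E x y && (e == [set x; y])]].

Definition lg_adj (k : nat) (E : 'I_k -> rel V) : rel {set V} :=
  fun e f => [&& e \in dg_edges E, f \in dg_edges E, e != f & e :&: f != set0].

Definition lg_separator (k : nat) (E : 'I_k -> rel V) (a b : {set V})
    (U : {set {set V}}) : Prop :=
  [/\ U \subset dg_edges E, a \notin U, b \notin U &
      ~~ connect (fun e f => [&& lg_adj E e f, e \notin U & f \notin U]) a b].

Definition lg_min_separator_ab (k : nat) (E : 'I_k -> rel V) (a b : {set V})
    (U : {set {set V}}) : Prop :=
  lg_separator E a b U /\ (forall U' : {set {set V}}, U' \proper U -> ~ lg_separator E a b U').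

Definition lg_min_separator (k : nat) (E : 'I_k -> rel V) (F : {set {set V}}) : Prop :=
  exists a b, [/\ a \in dg_edges E, b \in dg_edges E, a != b, ~~ lg_adj E a b &
                  lg_min_separator_ab E a b F].

Definition Inc (k : nat) (E : 'I_k -> rel V) (u : V) : {set {set V}} :=
  [set e in dg_edges E | u \in e].

End Phylo.

(* Main.v *)
Require Import Defs.
From mathcomp Require Import all_boot.

Lemma key_path (T : finType) (r : rel T) (F : {set T}) (f : T) (p : seq T) (x : T) :
  path (fun e g => [&& r e g, e \notin F :\ f & g \notin F :\ f]) x p ->
  x != f ->
  connect (fun e g => [&& r e g, e \notin F & g \notin F]) x (last x p) \/
  exists g, connect (fun e g => [&& r e g, e \notin F & g \notin F]) x g
            /\ g \notin F /\ r g f.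
Proof.
elim: p x => [|y p IH] x /=; first by move=> _ _; left.
case/andP=> /and3P[rxy hx hy] hp xf.
have xF : x \notin F by move: hx; rewrite !inE xf.
have [yf|yf] := eqVneq y f.
  by right; exists x; split => //; split => //; rewrite -yf.
have yF : y \notin F by move: hy; rewrite !inE yf.
have Rxy : (fun e g => [&& r e g, e \notin F & g \notin F]) x y by rewrite rxy xF yF.
case: (IH y hp yf) => [c|[g [c [gF rg]]]].
  by left; apply: (connect_trans _ c); exact: connect1.
by right; exists g; split => //; apply: (connect_trans _ c); exact: connect1.
Qed.

Lemma lg_adj_sym (V : finType) (k : nat) (E : 'I_k -> rel V) : symmetric (lg_adj E).
Proof.
move=> e g; rewrite /lg_adj setIC eq_sym.
by case: (e \in dg_edges E); case: (g \in dg_edges E).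
Qed.

Theorem lemma3 (V : finType) (k : nat) (Vt : 'I_k -> {set V}) (E : 'I_k -> rel V)
  (hP : is_profile Vt E) (hconn : dg_connected Vt E)
  (F : {set {set V}}) (hF : lg_min_separator E F)
  (i : 'I_k) (u : V) (hu : u \in Vt i) :
  ~~ (Inc E u \subset F).
Proof.
case: hF => a [b [ha hb hab hnadj [[hsub haF hbF hnc] hmin]]].
apply/negP => HI.
have [w [wu wV]] : exists w, w != u /\ w \in dg_vert Vt.
  move: ha; rewrite inE => /existsP[x /existsP[y /andP[/existsP[j Exy] _]]].
  case: (hP.1 j) => [[_ irr inV _] _].
  have /andP[xV yV] := inV _ _ Exy.
  have xy : x != y by apply/eqP => exy; move: Exy; rewrite exy irr.
  have [xu|xu] := eqVneq x u.
    exists y; split; last by apply/bigcupP; exists j.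
    by rewrite -xu eq_sym.
  by exists x; split => //; apply/bigcupP; exists j.
have uV : u \in dg_vert Vt by apply/bigcupP; exists i.
have [z uz] : exists z, dg_adj E u z.
  case/connectP: (hconn u w uV wV) => [[|z p] /= hp wl].
    by move: wu; rewrite wl eqxx.
  by exists z; case/andP: hp.
set f := [set u; z].
have fE : f \in dg_edges E.
  by rewrite inE; apply/existsP; exists u; apply/existsP; exists z; rewrite uz eqxx.
have fF : f \in F by apply: (subsetP HI); rewrite inE fE !inE eqxx.
have sep' : connect (fun e g => [&& lg_adj E e g, e \notin F :\ f & g \notin F :\ f]) a b.
  apply/negP => nc; apply: (hmin (F :\ f)); first by apply: properD1.
  split => //.
  - by apply: subset_trans (subsetDl _ _) hsub.
  - by rewrite !inE negb_and haF orbT.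
  - by rewrite !inE negb_and hbF orbT.
  - exact/negP.
have symR' : symmetric (fun e g => [&& lg_adj E e g, e \notin F :\ f & g \notin F :\ f]).
  by move=> e g /=; rewrite lg_adj_sym; case: (lg_adj E g e); case: (e \notin _); case: (g \notin _).
have symR : symmetric (fun e g => [&& lg_adj E e g, e \notin F & g \notin F]).
  by move=> e g /=; rewrite lg_adj_sym; case: (lg_adj E g e); case: (e \notin _); case: (g \notin _).
have af : a != f by apply/eqP => af; move: haF; rewrite af fF.
have bf : b != f by apply/eqP => bf; move: hbF; rewrite bf fF.
have zin : forall g, g \notin F -> lg_adj E g f -> z \in g.
  move=> g gF /and4P[gE _ _ /set0Pn[y]].
  rewrite !inE => /andP[yg /orP[/eqP yu|/eqP yz]]; last by rewrite -yz.
  exfalso; move/negP: gF; apply; apply: (subsetP HI).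
  by rewrite inE gE -yu yg.
case/connectP: sep' => p hp bl.
case: (@key_path _ _ _ _ _ _ hp af); first by rewrite -bl => c; move/negP: hnc.
move=> [g [cg [gF rg]]].
have sep2 : connect (fun e g => [&& lg_adj E e g, e \notin F :\ f & g \notin F :\ f]) b a.
  by rewrite (sym_connect_sym symR'); apply/connectP; exists p.
case/connectP: sep2 => q hq al.
case: (@key_path _ _ _ _ _ _ hq bf); first by rewrite -al => c; by move/negP: hnc; apply; rewrite (sym_connect_sym symR).
move=> [h [ch [hF rh]]].
apply/negP: hnc; rewrite negbK.
rewrite (sym_connect_sym symR) in ch.
have [gh|gh] := eqVneq g h; first by apply: (connect_trans cg); rewrite gh.
apply: (connect_trans cg); apply: (connect_trans _ ch).
apply: connect1; rewrite gF hF andbT /lg_adj gh.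
move: (rg) (rh) => /and4P[-> _ _ _] /and4P[-> _ _ _] /=.
by rewrite andbT; apply/set0Pn; exists z; rewrite inE (zin g gF rg) (zin h hF rh).
Qed.
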